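(* Let $F$ be a field, $n\ge1$, and let $G=\mathrm{Sp}_{2n}(F)$, realized as the subgroup of $\mathrm{SL}_{2n}(F)$ of block matrices $\begin{pmatrix}a&b\\c&d\end{pmatrix}$ ($n\times n$ blocks) with $ad^T-bc^T=1_n$ and $ab^T$, $cd^T$ symmetric. Let $U=\left\{\begin{pmatrix}1&k\\0&1\end{pmatrix}: k\text{ symmetric}\right\}$, $U^T=\left\{\begin{pmatrix}1&0\\k&1\end{pmatrix}: k\text{ symmetric}\right\}$, $H=\left\{\begin{pmatrix}a^{-1}&0\\0&a^T\end{pmatrix}: a\in\mathrm{GL}_n(F)\right\}$. Then $G=U^TUU^TH$. *)

(* Defs.v *)
From HB Require Import structures.
From mathcomp Require Import all_boot all_order all_algebra.
Set Implicit Arguments. Unset Strict Implicit. Unset Printing Implicit Defensive.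
Import GRing.Theory.
Local Open Scope ring_scope.

Definition sym_mx (F : fieldType) (n : nat) (k : 'M[F]_n) : Prop := k^T = k.

Definition Sp_mx (F : fieldType) (n : nat) (g : 'M[F]_(n + n)) : Prop :=
  [/\ \det g = 1,
      ulsubmx g *m (drsubmx g)^T - ursubmx g *m (dlsubmx g)^T = 1%:M,
      sym_mx (ulsubmx g *m (ursubmx g)^T) &
      sym_mx (dlsubmx g *m (drsubmx g)^T)].

Definition U_elt (F : fieldType) (n : nat) (k : 'M[F]_n) : 'M[F]_(n + n) :=
  block_mx 1%:M k 0 1%:M.
Definition UT_elt (F : fieldType) (n : nat) (k : 'M[F]_n) : 'M[F]_(n + n) :=
  block_mx 1%:M 0 k 1%:M.
Definition H_elt (F : fieldType) (n : nat) (a : 'M[F]_n) : 'M[F]_(n + n) :=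
  block_mx (invmx a) 0 0 a^T.

(* Main.v *)
Require Import Defs.
From mathcomp Require Import all_boot all_order all_algebra.
Import GRing.Theory.
Set Implicit Arguments. Unset Strict Implicit.
Local Open Scope ring_scope.

Section S.
Variables (F : fieldType) (n : nat).
Local Notation M := 'M[F]_n.

Definition Jmx : 'M[F]_(n + n) := block_mx 0 1%:M (- 1%:M) 0.

Lemma gJgT_block (a b c d : M) :
  block_mx a b c d *m Jmx *m (block_mx a b c d)^T =
  block_mx (a *m b^T - b *m a^T) (a *m d^T - b *m c^T)
           (c *m b^T - d *m a^T) (c *m d^T - d *m c^T).
Proof.
rewrite /Jmx tr_block_mx !mulmx_block !(mul0mx, mulmx0, mul1mx, mulmx1, mulmxN, mulNmx, addr0, add0r).
by congr block_mx; rewrite addrC.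
Qed.

Lemma symE (a b : M) : sym_mx (a *m b^T) <-> a *m b^T - b *m a^T = 0.
Proof.
rewrite /sym_mx trmx_mul trmxK; split => [->|/eqP]; first by rewrite subrr.
by rewrite subr_eq0 => /eqP.
Qed.

Lemma SpJ (g : 'M[F]_(n + n)) : Sp_mx g <-> \det g = 1 /\ g *m Jmx *m g^T = Jmx.
Proof.
rewrite -[g]submxK /Sp_mx block_mxKul block_mxKur block_mxKdl block_mxKdr gJgT_block.
set a := ulsubmx g; set b := ursubmx g; set c := dlsubmx g; set d := drsubmx g.
split.
  case=> -> h1 /symE h2 /symE h3; split => //.
  rewrite h2 h3 h1 /Jmx; congr block_mx.
  by rewrite -trmx1 -h1 raddfB /= !trmx_mul !trmxK opprB.
case=> -> /eq_block_mx [h1 h2 h3 h4]; split => //; exact/symE.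
Qed.

Lemma JJ : Jmx *m Jmx = - 1%:M.
Proof.
rewrite /Jmx mulmx_block !(mul0mx, mulmx0, mul1mx, mulmx1, mulmxN, mulNmx, addr0, add0r).
by rewrite (scalar_mx_block n n) opp_block_mx oppr0.
Qed.

Lemma gTJg (g : 'M[F]_(n + n)) : g *m Jmx *m g^T = Jmx -> g^T *m Jmx *m g = Jmx.
Proof.
move=> h.
have h1 : g *m (- (Jmx *m g^T *m Jmx)) = 1%:M.
  by rewrite mulmxN !mulmxA h JJ opprK.
have := mulmx1C h1; rewrite mulNmx => /(congr1 -%R); rewrite opprK => h2.
have : Jmx *m (Jmx *m g^T *m Jmx *m g) = Jmx *m (- 1%:M) by rewrite h2.
by rewrite !mulmxA JJ mulmxN mulmx1 !mulNmx mul1mx => /eqP; rewrite eqr_opp => /eqP.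
Qed.

Lemma col_cond (a b c d : M) :
  block_mx a b c d *m Jmx *m (block_mx a b c d)^T = Jmx -> b^T *m d = d^T *m b.
Proof.
move/gTJg; rewrite -{2}(trmxK (block_mx a b c d)) tr_block_mx gJgT_block !trmxK.
rewrite /Jmx => /eq_block_mx [_ _ _ /eqP]; by rewrite subr_eq0 => /eqP.
Qed.

Lemma Jmul (g h : 'M[F]_(n + n)) : g *m Jmx *m g^T = Jmx -> h *m Jmx *m h^T = Jmx ->
  (g *m h) *m Jmx *m (g *m h)^T = Jmx.
Proof.
by move=> hg hh; rewrite trmx_mul !mulmxA -(mulmxA g h) -(mulmxA g (h *m Jmx)) -(mulmxA g (h *m Jmx *m h^T)) hh mulmxA hg.
Qed.

Lemma J_UT (k : M) : sym_mx k -> UT_elt k *m Jmx *m (UT_elt k)^T = Jmx.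
Proof.
move=> hk; rewrite /UT_elt gJgT_block /Jmx !(trmx0, trmx1, mulmx0, mul0mx, mul1mx, mulmx1, subr0, sub0r).
by rewrite hk subrr.
Qed.

Lemma J_U (k : M) : sym_mx k -> U_elt k *m Jmx *m (U_elt k)^T = Jmx.
Proof.
move=> hk; rewrite /U_elt gJgT_block /Jmx !(trmx0, trmx1, mulmx0, mul0mx, mul1mx, mulmx1, subr0, sub0r).
by rewrite hk subrr.
Qed.

Lemma J_H (a : M) : a \in unitmx -> H_elt a *m Jmx *m (H_elt a)^T = Jmx.
Proof.
move=> ha; rewrite /H_elt gJgT_block /Jmx !(trmx0, trmx1, mulmx0, mul0mx, mul1mx, mulmx1, subr0, sub0r).
by rewrite oppr0 trmxK mulVmx // -trmx_mul mulVmx // trmx1.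
Qed.


Lemma idem_key (P D : M) (y : 'cV[F]_n) : P *m P = P -> P *m D = D^T *m P ->
  D *m y = (P *m D - P) *m P *m y -> P *m y = 0 /\ D *m y = 0.
Proof.
move=> PP PD h.
have PDP : P *m D *m P = P *m D by rewrite PD -mulmxA PP.
have h' : D *m y = P *m D *m y - P *m y by rewrite h mulmxBl PDP PP mulmxBl.
have : P *m (D *m y) = P *m (P *m D *m y - P *m y) by rewrite -h'.
rewrite mulmxBr !mulmxA PP => e.
have Py : P *m y = 0.
  have : P *m y = P *m D *m y - (P *m D *m y - P *m y) by rewrite opprB addrC subrK.
  by rewrite -e subrr.
split=> //.
by rewrite h' Py subr0 PD -mulmxA Py mulmx0.
Qed.

Lemma exists_k (b d : M) : b^T *m d = d^T *m b ->
  (forall x : 'cV_n, b *m x = 0 -> d *m x = 0 -> x = 0) ->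
  exists k, sym_mx k /\ (d - k *m b) \in unitmx.
Proof.
move=> hbd hinj.
set L := col_ebase b; set R := row_ebase b; set P : M := pid_mx (\rank b).
have Eb : b = L *m P *m R by rewrite mulmx_ebase.
have uL : L \in unitmx by apply: col_ebase_unit.
have uR : R \in unitmx by apply: row_ebase_unit.
set Li := invmx L; set Ri := invmx R.
set d' := L^T *m d *m Ri.
have PP : P *m P = P by rewrite pid_mx_id // rank_leq_col.
have PT : P^T = P by rewrite tr_pid_mx.
have LP : L *m P = b *m Ri by rewrite Eb mulmxK.
have e1 : P *m L^T = Ri^T *m b^T by rewrite -{1}PT -trmx_mul LP trmx_mul.
have e2 : d'^T *m P = Ri^T *m d^T *m (b *m Ri).
  by rewrite /d' !trmx_mul trmxK !mulmxA -(mulmxA _ L P) LP mulmxA.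
have Pd : P *m d' = d'^T *m P.
  by rewrite e2 /d' !mulmxA e1 -!mulmxA (mulmxA (b^T)) hbd -mulmxA.
set k' := P *m d' - P.
exists (Li^T *m k' *m Li); split.
  by rewrite /sym_mx !trmx_mul trmxK mulmxA /k' raddfB /= trmx_mul PT -Pd.
rewrite unitmxE unitfE -det_tr; apply/negP => /det0P [v vn0 hv].
set M := d - _ in hv.
have hx : M *m v^T = 0 by rewrite -(trmxK (M *m v^T)) trmx_mul trmxK hv trmx0.
apply: (negP vn0); rewrite -trmx_eq0; apply/eqP.
have LLi : L^T *m Li^T = 1%:M by rewrite -trmx_mul mulVmx // trmx1.
have Lib : Li *m b = P *m R by rewrite Eb !mulmxA mulVmx // mul1mx.
set y := R *m v^T.
have h2 : L^T *m d *m v^T = k' *m P *m y.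
  have : L^T *m (M *m v^T) = 0 by rewrite hx mulmx0.
  rewrite -mulmxA /M mulmxBl mulmxBr => /eqP; rewrite subr_eq0 => /eqP ->.
  by rewrite !mulmxA LLi mul1mx -(mulmxA k' Li b) Lib !mulmxA.
have hy : d' *m y = (P *m d' - P) *m P *m y.
  by rewrite -h2 /d' /y !mulmxA -(mulmxA _ Ri R) mulVmx // mulmx1.
have [Py dy] := @idem_key P d' y PP Pd hy.
apply: hinj.
  by rewrite Eb -!mulmxA -/y Py mulmx0.
have uLT : L^T \in unitmx by rewrite unitmx_tr.
have h3 : L^T *m (d *m v^T) = 0.
  by rewrite mulmxA -dy /d' /y -!mulmxA (mulmxA Ri) mulVmx // mul1mx.
by rewrite -[d *m v^T](mulKmx uLT) h3 mulmx0.
Qed.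

Lemma main (g : 'M[F]_(n + n)) :
  Sp_mx g <->
  exists (k1 k2 k3 a : 'M[F]_n),
    [/\ sym_mx k1, sym_mx k2, sym_mx k3, a \in unitmx &
        g = UT_elt k1 *m U_elt k2 *m UT_elt k3 *m H_elt a].
Proof.
split.
  move=> /SpJ [hdet hJ].
  have := submxK g; move: (ulsubmx g) (ursubmx g) (dlsubmx g) (drsubmx g) => a b c d Eg.
  have hJb := hJ; rewrite -Eg in hJb.
  have hbd := col_cond hJb.
  have hunit : g \in unitmx by rewrite unitmxE hdet unitr1.
  have hinj : forall x : 'cV_n, b *m x = 0 -> d *m x = 0 -> x = 0.
    move=> x hb hd.
    have h : g *m col_mx 0 x = 0 by rewrite -Eg mul_block_col !mulmx0 !add0r hb hd col_mx0.
    by have := mulKmx hunit (col_mx 0 x); rewrite h mulmx0 -col_mx0 => /eq_col_mx [_ ->].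
  have [k1 [sk1 uk]] := exists_k hbd hinj.
  set c' := c - k1 *m a; set d' := d - k1 *m b.
  have Eg' : g = UT_elt k1 *m block_mx a b c' d'.
    rewrite -Eg /UT_elt mulmx_block !(mul1mx, mul0mx, add0r, addr0); congr block_mx;
    by rewrite /c' /d' addrC subrK.
  have hJ' : block_mx a b c' d' *m Jmx *m (block_mx a b c' d')^T = Jmx.
    have -> : block_mx a b c' d' = UT_elt (- k1) *m g.
      rewrite -Eg /UT_elt mulmx_block !(mul1mx, mul0mx, add0r, addr0); congr block_mx;
      by rewrite /c' /d' addrC mulNmx.
    apply: Jmul => //; apply: J_UT; by rewrite /sym_mx raddfN /= sk1.
  have hbd' := col_cond hJ'.
  move: hJ'; rewrite gJgT_block /Jmx => /eq_block_mx [_ h12 _ h22].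
  have uT : d'^T \in unitmx by rewrite unitmx_tr.
  exists k1, (b *m invmx d'), (c' *m d'^T), d'^T; split => //.
  - rewrite /sym_mx trmx_mul trmx_inv -[LHS](mulmxK uk) -(mulmxA _ (b^T)) hbd'.
    by rewrite mulmxA mulVmx // mul1mx.
  - exact/symE.
  rewrite Eg' -!mulmxA; congr (_ *m _); rewrite mulmxA.
  rewrite /U_elt /UT_elt /H_elt !mulmx_block !(mul1mx, mul0mx, mulmx1, mulmx0, add0r, addr0) trmxK.
  rewrite mulmxKV // mulmxK //; congr block_mx.
  have e : c' *m d'^T = d' *m c'^T by apply/eqP; rewrite -subr_eq0 h22.
  by rewrite e mulmxA mulmxKV // -h12 subrK mulmxK.
move=> [k1 [k2 [k3 [a [s1 s2 s3 ua ->]]]]].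
apply/SpJ; split.
  rewrite !det_mulmx /UT_elt /U_elt /H_elt det_lblock det_ublock det_lblock det_ublock.
  by rewrite !det1 det_inv det_tr !mulr1 mul1r mulVr // -unitmxE.
by apply: Jmul; [apply: Jmul; [apply: Jmul|] |]; [apply: J_UT|apply: J_U|apply: J_UT|apply: J_H].
Qed.
End S.

Theorem lemma4p1 (F : fieldType) (n : nat) (hn : (0 < n)%N) (g : 'M[F]_(n + n)) :
  Sp_mx g <->
  exists (k1 k2 k3 a : 'M[F]_n),
    [/\ sym_mx k1, sym_mx k2, sym_mx k3, a \in unitmx &
        g = UT_elt k1 *m U_elt k2 *m UT_elt k3 *m H_elt a].
Proof. exact: main. Qed.
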